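(* Let $U\subseteq\mathbb{R}^3_{a,b,w}$ be a neighborhood of $0$, let $f(a,b,w)$ be a homogeneous polynomial of degree $k$, and let $\mathcal{L}'$ be a differential operator such that $\mathcal{L}'(\mathcal{W}^1(U))\subseteq\mathcal{W}^1(U)$. Then there exist $u,v'\in\mathcal{W}^1(U)$ such that $$(\Delta_{\mathbb{R}^3}+\mathcal{L}')u=\frac{f}{r_w^{k+1}}+v'.$$
   Context: $r_w(a,b,w)=\sqrt{a^2+b^2+w^2}$. For $\ell\in\mathbb{N}$, $\mathcal{W}^\ell(U)$ is the set of $f\in C^\infty(U\setminus\{0\})$ such that $\nabla^jf=\mathcal{O}(r_w^{\ell-j}\log r_w)$ as $r_w\to0$ for all $j\geq0$. $\Delta_{\mathbb{R}^3}$ is the Euclidean Laplacian. *)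

(* Defs.v *)
From Stdlib Require Import Reals List.
From Coquelicot Require Import Coquelicot.
Import ListNotations.
Open Scope R_scope.

Definition pt : Type := (R * R * R)%type.

Definition origin : pt := (0, 0, 0).

Definition rw (p : pt) : R :=
  let '(a, b, w) := p in sqrt (a ^ 2 + b ^ 2 + w ^ 2).

Inductive coord : Type := CA | CB | CW.

Definition shift (i : coord) (t : R) (p : pt) : pt :=
  let '(a, b, w) := p in
  match i with
  | CA => (a + t, b, w)
  | CB => (a, b + t, w)
  | CW => (a, b, w + t)
  end.

Definition pd (i : coord) (f : pt -> R) : pt -> R :=
  fun p => Derive (fun t => f (shift i t p)) 0.

Fixpoint pds (l : list coord) (f : pt -> R) : pt -> R :=
  match l with
  | nil => f
  | i :: l' => pd i (pds l' f)
  end.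

Definition punct (U : pt -> Prop) (p : pt) : Prop := U p /\ p <> origin.

Definition smooth_on (D : pt -> Prop) (f : pt -> R) : Prop :=
  forall (l : list coord) (p : pt), D p ->
    continuous (pds l f) p /\
    forall i : coord, ex_derive (fun t => pds l f (shift i t p)) 0.

(* W^l(U): smooth on U\{0}, and nabla^j f = O(r_w^(l-j) log r_w) as r_w -> 0,
   for every j (expressed componentwise via all iterated partials of order j). *)
Definition W (l : nat) (U : pt -> Prop) (f : pt -> R) : Prop :=
  smooth_on (punct U) f /\
  forall ls : list coord,
    exists C delta : R, 0 < delta /\
      forall p : pt, punct U p -> rw p < delta ->
        Rabs (pds ls f p) <=
          C * powerRZ (rw p) (Z.of_nat l - Z.of_nat (length ls))%Z * Rabs (ln (rw p)).

Definition lap (u : pt -> R) : pt -> R :=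
  fun p => pds [CA; CA] u p + pds [CB; CB] u p + pds [CW; CW] u p.

(* A (linear) differential operator: finite sum of coefficient functions times
   iterated partial derivatives, sum_alpha c_alpha(p) * (d^alpha u)(p). *)
Definition diff_op : Type := list (list coord * (pt -> R)).

Definition apply_op (L : diff_op) (u : pt -> R) : pt -> R :=
  fun p => fold_right (fun lc acc => acc + snd lc p * pds (fst lc) u p) 0 L.

Definition hom_poly (k : nat) (f : pt -> R) : Prop :=
  exists c : nat -> nat -> R, forall a b w : R,
    f (a, b, w) =
      sum_f_R0 (fun i =>
        sum_f_R0 (fun j => c i j * a ^ i * b ^ j * w ^ (k - i - j)) (k - i)) k.

(* Main.v *)
Require Import Defs.
From Stdlib Require Import Reals List Lra Lia.
From Coquelicot Require Import Coquelicot.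
Import ListNotations.
Open Scope R_scope.

Lemma Rpower_m2 s m : 0 < s -> Rpower s (m - 2) = Rpower s m / (s * s).
Proof.
  intros Hs. unfold Rminus. rewrite Rpower_plus, Rpower_Ropp.
  replace 2 with (INR 2) by (simpl; ring). rewrite Rpower_pow by lra.
  simpl. unfold Rdiv. f_equal. f_equal. ring.
Qed.

Lemma is_derive_eq (f : R -> R) (x l l' : R) : is_derive f x l -> l = l' -> is_derive f x l'.
Proof. intros H ->; exact H. Qed.

Lemma der_rpow (g : R -> R) (g' m : R) :
  is_derive g 0 g' -> 0 < g 0 ->
  is_derive (fun t => Rpower (sqrt (g t)) m) 0
    (m * (g' / 2) * Rpower (sqrt (g 0)) (m - 2)).
Proof.
  intros Hd Hp.
  assert (Hs : 0 < sqrt (g 0)) by (apply sqrt_lt_R0; lra).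
  assert (H : is_derive (fun t => exp (m * ln (sqrt (g t)))) 0
     (m * (1 * Derive (fun x : R => g x) 0 * / (2 * sqrt (g 0)) * / sqrt (g 0)) *
     exp (m * ln (sqrt (g 0))))).
  { auto_derive. repeat split; try easy. exists g'; easy. lra. }
  replace (Derive (fun x => g x) 0) with g' in H by (symmetry; now apply is_derive_unique).
  rewrite Rpower_m2 by easy.
  eapply is_derive_eq. exact H.
  unfold Rpower. field. lra.
Qed.

Lemma der_ln (g : R -> R) (g' : R) :
  is_derive g 0 g' -> 0 < g 0 ->
  is_derive (fun t => ln (sqrt (g t))) 0
    ((g' / 2) * Rpower (sqrt (g 0)) (-2)).
Proof.
  intros Hd Hp.
  assert (Hs : 0 < sqrt (g 0)) by (apply sqrt_lt_R0; lra).
  assert (H : is_derive (fun t => ln (sqrt (g t))) 0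
     (1 * Derive (fun x : R => g x) 0 * / (2 * sqrt (g 0)) * / sqrt (g 0))).
  { auto_derive. repeat split; try easy. exists g'; easy. lra. }
  replace (Derive (fun x => g x) 0) with g' in H by (symmetry; now apply is_derive_unique).
  replace (-2) with (0 - 2) by ring.
  rewrite Rpower_m2, Rpower_O by easy.
  eapply is_derive_eq. exact H.
  field. lra.
Qed.

Definition proj (i : coord) (p : pt) : R :=
  let '(a, b, w) := p in match i with CA => a | CB => b | CW => w end.

Definition Q (p : pt) : R := let '(a, b, w) := p in a ^ 2 + b ^ 2 + w ^ 2.

Definition ceq (i j : coord) : bool :=
  match i, j with CA, CA | CB, CB | CW, CW => true | _, _ => false end.

Inductive expr :=
| EC (c : R) | EX (i : coord) | ER (m : R) | EL | EAdd (e1 e2 : expr) | EMul (e1 e2 : expr).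

Fixpoint ev (e : expr) (p : pt) : R :=
  match e with
  | EC c => c
  | EX i => proj i p
  | ER m => Rpower (rw p) m
  | EL => ln (rw p)
  | EAdd e1 e2 => ev e1 p + ev e2 p
  | EMul e1 e2 => ev e1 p * ev e2 p
  end.

Fixpoint dv (i : coord) (e : expr) : expr :=
  match e with
  | EC _ => EC 0
  | EX j => EC (if ceq i j then 1 else 0)
  | ER m => EMul (EC m) (EMul (EX i) (ER (m - 2)))
  | EL => EMul (EX i) (ER (-2))
  | EAdd e1 e2 => EAdd (dv i e1) (dv i e2)
  | EMul e1 e2 => EAdd (EMul (dv i e1) e2) (EMul e1 (dv i e2))
  end.

Lemma rw_Q p : rw p = sqrt (Q p).
Proof. destruct p as [[a b] w]; reflexivity. Qed.

Lemma Q_pos p : p <> origin -> 0 < Q p.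
Proof.
  destruct p as [[a b] w]; simpl; intros H.
  destruct (Req_dec a 0); destruct (Req_dec b 0); destruct (Req_dec w 0);
   subst; try (exfalso; apply H; reflexivity); nra.
Qed.

Lemma rw_pos p : p <> origin -> 0 < rw p.
Proof. intros H; rewrite rw_Q; apply sqrt_lt_R0, Q_pos, H. Qed.

Lemma Q_shift i t q : Q (shift i t q) = Q q + 2 * t * proj i q + t ^ 2.
Proof. destruct q as [[a b] w]; destruct i; simpl; ring. Qed.

Lemma proj_shift i j t q :
  proj j (shift i t q) = proj j q + (if ceq i j then t else 0).
Proof. destruct q as [[a b] w]; destruct i, j; simpl; ring. Qed.

Lemma Q_proj q : Q q = proj CA q * proj CA q + proj CB q * proj CB q + proj CW q * proj CW q.
Proof. destruct q as [[a b] w]; simpl; ring. Qed.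

Arguments proj : simpl never.
Arguments rw : simpl never.
Arguments Q : simpl never.
Arguments shift : simpl never.

Lemma der_const (c x : R) : is_derive (fun _ : R => c) x 0.
Proof. auto_derive; easy. Qed.

Lemma der_ev e i q : q <> origin ->
  is_derive (fun t => ev e (shift i t q)) 0 (ev (dv i e) q).
Proof.
  intros Hq. pose proof (Q_pos q Hq) as HQ.
  assert (Hg : is_derive (fun t => Q q + 2 * t * proj i q + t ^ 2) 0 (2 * proj i q)).
  { auto_derive. easy. ring. }
  induction e; simpl.
  - apply der_const.
  - apply (is_derive_ext (fun t => proj i0 q + (if ceq i i0 then t else 0))).
    intros t; rewrite proj_shift; reflexivity.
    destruct (ceq i i0).
    + auto_derive. easy. ring.
    + auto_derive. easy. ring.
  - apply (is_derive_ext (fun t => Rpower (sqrt (Q q + 2 * t * proj i q + t ^ 2)) m)).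
    intros t; rewrite rw_Q, Q_shift; reflexivity.
    eapply is_derive_eq. apply (der_rpow (fun t => Q q + 2 * t * proj i q + t ^ 2)).
    exact Hg. simpl. lra.
    rewrite rw_Q. replace (Q q + 2 * 0 * proj i q + 0 ^ 2) with (Q q) by ring. field.
  - apply (is_derive_ext (fun t => ln (sqrt (Q q + 2 * t * proj i q + t ^ 2)))).
    intros t; rewrite rw_Q, Q_shift; reflexivity.
    eapply is_derive_eq. apply (der_ln (fun t => Q q + 2 * t * proj i q + t ^ 2)).
    exact Hg. simpl. lra.
    rewrite rw_Q. replace (Q q + 2 * 0 * proj i q + 0 ^ 2) with (Q q) by ring. field.
  - apply (is_derive_plus (fun t => ev e1 (shift i t q)) (fun t => ev e2 (shift i t q))); assumption.
  - eapply is_derive_eq.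
    apply (is_derive_mult _ _ _ _ _ IHe1 IHe2).
    intros; apply Rmult_comm.
    simpl. unfold plus, mult; simpl. 
    assert (E: forall e, ev e (shift i 0 q) = ev e q).
    { destruct q as [[a b] w]; destruct i; unfold shift; rewrite Rplus_0_r; reflexivity. }
    rewrite !E. ring.
Qed.

Lemma cont_plus (f g : pt -> R) q : continuous f q -> continuous g q ->
  continuous (fun p => f p + g p) q.
Proof. intros; apply (continuous_plus f g); assumption. Qed.

Lemma cont_mult (f g : pt -> R) q : continuous f q -> continuous g q ->
  continuous (fun p => f p * g p) q.
Proof. intros; apply (continuous_mult f g); assumption. Qed.

Lemma cont_proj i q : continuous (proj i) q.
Proof.
  destruct q as [[a b] w].
  destruct i.
  - apply (continuous_ext (fun p : pt => fst (fst p))).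
    intros [[x y] z]; reflexivity.
    apply (continuous_comp (@fst (R*R) R) fst). apply continuous_fst. apply continuous_fst.
  - apply (continuous_ext (fun p : pt => snd (fst p))).
    intros [[x y] z]; reflexivity.
    apply (continuous_comp (@fst (R*R) R) snd). apply continuous_fst. apply continuous_snd.
  - apply (continuous_ext (fun p : pt => snd p)).
    intros [[x y] z]; reflexivity.
    apply continuous_snd.
Qed.

Lemma cont_rw q : continuous rw q.
Proof.
  apply (continuous_ext (fun p => sqrt (proj CA p * proj CA p + proj CB p * proj CB p + proj CW p * proj CW p))).
  intros p; rewrite rw_Q, Q_proj; reflexivity.
  apply (continuous_comp (fun p => proj CA p * proj CA p + proj CB p * proj CB p + proj CW p * proj CW p) sqrt).
  2: apply continuous_sqrt.
  repeat apply cont_plus; apply cont_mult; apply cont_proj.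
Qed.

Lemma cont_ln_rw q : q <> origin -> continuous (fun p => ln (rw p)) q.
Proof.
  intros Hq.
  apply (continuous_comp rw ln). apply cont_rw. apply continuous_ln. apply rw_pos, Hq.
Qed.

Lemma cont_ev e q : q <> origin -> continuous (ev e) q.
Proof.
  intros Hq. induction e; simpl.
  - apply continuous_const.
  - apply cont_proj.
  - unfold Rpower. apply (continuous_comp (fun p => m * ln (rw p)) exp).
    2: apply continuous_exp.
    apply cont_mult. apply continuous_const. apply cont_ln_rw, Hq.
  - apply cont_ln_rw, Hq.
  - apply cont_plus; assumption.
  - apply cont_mult; assumption.
Qed.

Fixpoint dvs (l : list coord) (e : expr) : expr :=
  match l with [] => e | i :: l' => dv i (dvs l' e) end.

Lemma locally_R (x r : R) (P : R -> Prop) : 0 < r ->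
  (forall y, Rabs (y - x) < r -> P y) -> locally x P.
Proof.
  intros Hr HP. exists (mkposreal r Hr). intros y Hy. apply HP. exact Hy.
Qed.

Lemma shift_nz i t q : q <> origin -> Rabs t < rw q -> shift i t q <> origin.
Proof.
  intros Hq Ht He.
  assert (H1 : Q (shift i t q) = 0) by (rewrite He; unfold Q, origin; simpl; ring).
  assert (H2 : proj i (shift i t q) = 0) by (rewrite He; destruct i; reflexivity).
  rewrite Q_shift in H1. rewrite proj_shift in H2.
  assert (Hc : ceq i i = true) by (destruct i; reflexivity). rewrite Hc in H2.
  assert (HQ : Q q = t ^ 2).
  { replace (proj i q) with (- t) in H1 by lra. lra. }
  rewrite rw_Q, HQ in Ht.
  rewrite <- (Rsqr_pow2 t), sqrt_Rsqr_abs in Ht. lra.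
Qed.

Lemma loc_shift i q : q <> origin -> locally 0 (fun t => shift i t q <> origin).
Proof.
  intros Hq. apply (locally_R 0 (rw q)). apply rw_pos, Hq.
  intros y Hy. apply shift_nz; auto. rewrite Rminus_0_r in Hy. exact Hy.
Qed.

Lemma pds_ev l e q : q <> origin -> pds l (ev e) q = ev (dvs l e) q.
Proof.
  revert q. induction l as [|i l IH]; intros q Hq; simpl.
  - reflexivity.
  - unfold pd.
    rewrite (Derive_ext_loc _ (fun t => ev (dvs l e) (shift i t q))).
    + apply is_derive_unique. apply der_ev, Hq.
    + eapply filter_imp. 2: apply (loc_shift i q Hq). intros t Ht. apply IH, Ht.
Qed.

Lemma loc_nz p : p <> origin -> locally p (fun y => y <> origin).
Proof.
  intros Hp.
  assert (H : locally (rw p) (fun z => 0 < z)).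
  { apply (locally_R (rw p) (rw p)). apply rw_pos, Hp.
    intros y Hy. apply Rabs_def2 in Hy. lra. }
  pose proof (cont_rw p _ H) as H'.
  eapply filter_imp. 2: exact H'. simpl. intros y Hy He. rewrite He in Hy.
  unfold origin in Hy. rewrite rw_Q in Hy. unfold Q in Hy.
  replace (0 ^ 2 + 0 ^ 2 + 0 ^ 2) with 0 in Hy by ring. rewrite sqrt_0 in Hy. lra.
Qed.

Lemma smooth_ev (D : pt -> Prop) e : (forall p, D p -> p <> origin) -> smooth_on D (ev e).
Proof.
  intros HD l p Hp. pose proof (HD p Hp) as Hq. split.
  - apply (continuous_ext_loc _ (ev (dvs l e))).
    + eapply filter_imp. 2: apply (loc_nz p Hq). intros y Hy. symmetry. apply pds_ev, Hy.
    + apply cont_ev, Hq.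
  - intros i. exists (ev (dv i (dvs l e)) p).
    apply (is_derive_ext_loc (fun t => ev (dvs l e) (shift i t p))).
    + eapply filter_imp. 2: apply (loc_shift i p Hq). intros t Ht. symmetry. apply pds_ev, Ht.
    + apply der_ev, Hq.
Qed.

Fixpoint sdeg (e : expr) : R :=
  match e with
  | EC _ => 0 | EX _ => 1 | ER m => m | EL => 0
  | EAdd e1 e2 => Rmin (sdeg e1) (sdeg e2)
  | EMul e1 e2 => sdeg e1 + sdeg e2
  end.

Fixpoint slog (e : expr) : nat :=
  match e with
  | EC _ | EX _ | ER _ => 0%nat | EL => 1%nat
  | EAdd e1 e2 => Nat.max (slog e1) (slog e2)
  | EMul e1 e2 => (slog e1 + slog e2)%nat
  end.

Lemma Rmin_case_le a b c : c <= a -> c <= b -> c <= Rmin a b.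
Proof. apply Rmin_glb. Qed.

Lemma sdeg_dv i e : sdeg e - 1 <= sdeg (dv i e) /\ (slog (dv i e) <= slog e)%nat.
Proof.
  induction e; simpl.
  - split; [lra | lia].
  - split; [lra | lia].
  - split; [lra | lia].
  - split; [lra | lia].
  - destruct IHe1, IHe2. split; [|lia].
    apply Rmin_glb.
    + pose proof (Rmin_l (sdeg e1) (sdeg e2)); lra.
    + pose proof (Rmin_r (sdeg e1) (sdeg e2)); lra.
  - destruct IHe1, IHe2. split; [|lia].
    apply Rmin_glb; lra.
Qed.

Lemma sdeg_dvs l e : sdeg e - INR (length l) <= sdeg (dvs l e) /\ (slog (dvs l e) <= slog e)%nat.
Proof.
  induction l as [|i l IH]; cbn [dvs].
  - simpl; split; [lra | lia].
  - destruct (sdeg_dv i (dvs l e)). destruct IH. change (length (i :: l)) with (S (length l)). rewrite S_INR. split; [lra | lia].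
Qed.

Definition Bnd (e : expr) (d : R) (m : nat) : Prop :=
  exists C, 0 <= C /\ forall q, q <> origin -> rw q < 1 ->
    Rabs (ev e q) <= C * Rpower (rw q) d * (1 + Rabs (ln (rw q))) ^ m.

Lemma exp_le a b : a <= b -> exp a <= exp b.
Proof. intros [H|H]. left; apply exp_increasing, H. subst; lra. Qed.

Lemma Rpower_mono_small r d d' : 0 < r -> r < 1 -> d' <= d -> Rpower r d <= Rpower r d'.
Proof.
  intros H0 H1 Hd. unfold Rpower. apply exp_le.
  assert (ln r < 0). { rewrite <- ln_1. apply ln_increasing; lra. }
  nra.
Qed.

Lemma Rpower_pos r d : 0 < Rpower r d.
Proof. unfold Rpower; apply exp_pos. Qed.

Lemma L_ge1 r m : 1 <= (1 + Rabs (ln r)) ^ m.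
Proof. apply pow_R1_Rle. pose proof (Rabs_pos (ln r)); lra. Qed.

Lemma Bnd_weaken e d m d' m' : Bnd e d m -> d' <= d -> (m <= m')%nat -> Bnd e d' m'.
Proof.
  intros [C [HC H]] Hd Hm. exists C. split; auto.
  intros q Hq Hr. pose proof (rw_pos q Hq) as Hp.
  eapply Rle_trans. apply H; auto.
  apply Rmult_le_compat.
  - pose proof (Rpower_pos (rw q) d). nra.
  - pose proof (L_ge1 (rw q) m). lra.
  - apply Rmult_le_compat_l; auto. apply Rpower_mono_small; auto.
  - apply Rle_pow; auto. pose proof (Rabs_pos (ln (rw q))); lra.
Qed.

Lemma proj_le_rw i q : Rabs (proj i q) <= rw q.
Proof.
  rewrite rw_Q. rewrite <- sqrt_Rsqr_abs. apply sqrt_le_1_alt.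
  rewrite Q_proj. unfold Rsqr. destruct i; nra.
Qed.

Lemma Bnd_all e : Bnd e (sdeg e) (slog e).
Proof.
  induction e; unfold Bnd in *; cbn [ev sdeg slog].
  - exists (Rabs c). split. apply Rabs_pos. intros q Hq _.
    rewrite Rpower_O by (apply rw_pos, Hq). simpl. lra.
  - exists 1. split. lra. intros q Hq _.
    rewrite Rpower_1 by (apply rw_pos, Hq). simpl. rewrite Rmult_1_r, Rmult_1_l. apply proj_le_rw.
  - exists 1. split. lra. intros q Hq _.
    rewrite Rabs_pos_eq by (left; apply Rpower_pos). simpl. lra.
  - exists 1. split. lra. intros q Hq _.
    rewrite Rpower_O by (apply rw_pos, Hq). simpl. lra.
  - destruct (Bnd_weaken _ _ _ (Rmin (sdeg e1) (sdeg e2)) (Nat.max (slog e1) (slog e2)) IHe1)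
      as [C1 [HC1 H1]]; [apply Rmin_l | lia |].
    destruct (Bnd_weaken _ _ _ (Rmin (sdeg e1) (sdeg e2)) (Nat.max (slog e1) (slog e2)) IHe2)
      as [C2 [HC2 H2]]; [apply Rmin_r | lia |].
    exists (C1 + C2). split. lra. intros q Hq Hr.
    eapply Rle_trans. apply Rabs_triang.
    specialize (H1 q Hq Hr). specialize (H2 q Hq Hr).
    set (X := Rpower (rw q) (Rmin (sdeg e1) (sdeg e2))) in *.
    set (Y := (1 + Rabs (ln (rw q))) ^ Nat.max (slog e1) (slog e2)) in *.
    replace ((C1 + C2) * X * Y) with (C1 * X * Y + C2 * X * Y) by ring. lra.
  - destruct IHe1 as [C1 [HC1 H1]]. destruct IHe2 as [C2 [HC2 H2]].
    exists (C1 * C2). split. nra. intros q Hq Hr.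
    specialize (H1 q Hq Hr). specialize (H2 q Hq Hr).
    rewrite Rabs_mult, Rpower_plus, pow_add.
    replace (C1 * C2 * (Rpower (rw q) (sdeg e1) * Rpower (rw q) (sdeg e2)) *
       ((1 + Rabs (ln (rw q))) ^ slog e1 * (1 + Rabs (ln (rw q))) ^ slog e2))
      with ((C1 * Rpower (rw q) (sdeg e1) * (1 + Rabs (ln (rw q))) ^ slog e1) *
            (C2 * Rpower (rw q) (sdeg e2) * (1 + Rabs (ln (rw q))) ^ slog e2)) by ring.
    apply Rmult_le_compat; auto; apply Rabs_pos.
Qed.

Lemma W_ev U e : 1 <= sdeg e -> (slog e <= 1)%nat -> W 1 U (ev e).
Proof.
  intros H1 H2. split.
  - apply smooth_ev. intros p [_ H]; exact H.
  - intros ls. destruct (sdeg_dvs ls e) as [Hd Hl].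
    destruct (Bnd_weaken _ _ _ (1 - INR (length ls)) 1 (Bnd_all (dvs ls e))) as [C [HC H]];
      [lra | lia |].
    exists (2 * C), (exp (-1)). split. apply exp_pos.
    intros p [Up Hp] Hr.
    assert (He : exp (-1) < 1) by (rewrite <- exp_0; apply exp_increasing; lra).
    pose proof (rw_pos p Hp) as Hpos.
    rewrite pds_ev by auto. eapply Rle_trans. apply H; auto; lra.
    rewrite powerRZ_Rpower by auto.
    rewrite minus_IZR, <- !INR_IZR_INZ. simpl (INR 1).
    assert (Hl1 : ln (rw p) < -1).
    { rewrite <- (ln_exp (-1)). apply ln_increasing; auto. }
    rewrite Rabs_left by lra. rewrite pow_1.
    pose proof (Rpower_pos (rw p) (1 - INR (length ls))).
    set (P := Rpower (rw p) (1 - INR (length ls))) in *.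
    assert (0 <= C * P) by nra.
    replace (2 * C * P * - ln (rw p)) with (C * P * (2 * - ln (rw p))) by ring.
    apply Rmult_le_compat_l; lra.
Qed.

Inductive homog : expr -> Z -> Prop :=
| HC c : homog (EC c) 0
| HZ d : homog (EC 0) d
| HX i : homog (EX i) 1
| HA e1 e2 d : homog e1 d -> homog e2 d -> homog (EAdd e1 e2) d
| HM e1 e2 d1 d2 d : homog e1 d1 -> homog e2 d2 -> d = (d1 + d2)%Z -> homog (EMul e1 e2) d.

Lemma homog_dv i e d : homog e d -> homog (dv i e) (d - 1).
Proof.
  induction 1; simpl.
  - apply HZ.
  - apply HZ.
  - destruct (ceq i i0). replace (1 - 1)%Z with 0%Z by lia. apply HC. apply HZ.
  - apply HA; assumption.
  - apply HA.
    + apply (HM _ _ (d1 - 1) d2); auto; lia.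
    + apply (HM _ _ d1 (d2 - 1)); auto; lia.
Qed.

Lemma homog_neg e d : homog e d -> (d < 0)%Z -> forall q, ev e q = 0.
Proof.
  induction 1; intros Hd q; simpl.
  - lia.
  - reflexivity.
  - lia.
  - rewrite IHhomog1, IHhomog2 by auto. ring.
  - destruct (Z.lt_ge_cases d1 0).
    + rewrite IHhomog1 by auto. ring.
    + rewrite IHhomog2 by lia. ring.
Qed.

Lemma euler e d : homog e d -> forall q,
  proj CA q * ev (dv CA e) q + proj CB q * ev (dv CB e) q + proj CW q * ev (dv CW e) q
  = IZR d * ev e q.
Proof.
  induction 1; intros q; simpl.
  - ring.
  - ring.
  - destruct i; simpl; ring.
  - transitivity ((proj CA q * ev (dv CA e1) q + proj CB q * ev (dv CB e1) q + proj CW q * ev (dv CW e1) q)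
      + (proj CA q * ev (dv CA e2) q + proj CB q * ev (dv CB e2) q + proj CW q * ev (dv CW e2) q)).
    ring. rewrite IHhomog1, IHhomog2. ring.
  - transitivity ((proj CA q * ev (dv CA e1) q + proj CB q * ev (dv CB e1) q + proj CW q * ev (dv CW e1) q) * ev e2 q
      + ev e1 q * (proj CA q * ev (dv CA e2) q + proj CB q * ev (dv CB e2) q + proj CW q * ev (dv CW e2) q)).
    ring. rewrite IHhomog1, IHhomog2. subst d. rewrite plus_IZR. ring.
Qed.

Definition lapX (e : expr) : expr :=
  EAdd (EAdd (dv CA (dv CA e)) (dv CB (dv CB e))) (dv CW (dv CW e)).

Lemma homog_lapX e d : homog e d -> homog (lapX e) (d - 2).
Proof.
  intros H. unfold lapX.
  replace (d - 2)%Z with (d - 1 - 1)%Z by lia.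
  repeat apply HA; repeat apply homog_dv; exact H.
Qed.

Lemma sdeg_lapX e : sdeg e - 2 <= sdeg (lapX e) /\ (slog (lapX e) <= slog e)%nat.
Proof.
  unfold lapX.
  destruct (sdeg_dvs [CA; CA] e), (sdeg_dvs [CB; CB] e), (sdeg_dvs [CW; CW] e).
  simpl in *. split; [|lia].
  repeat apply Rmin_glb; lra.
Qed.

Lemma lap_prod P d m q : homog P d -> q <> origin ->
  ev (lapX (EMul P (ER m))) q =
  ev (lapX P) q * Rpower (rw q) m + m * (2 * IZR d + m + 1) * ev P q * Rpower (rw q) (m - 2).
Proof.
  intros HP Hq. pose proof (euler P d HP q) as HE.
  assert (HR : Rpower (rw q) (m - 2) = Rpower (rw q) (m - 2 - 2) *
     (proj CA q * proj CA q + proj CB q * proj CB q + proj CW q * proj CW q)).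
  { rewrite (Rpower_m2 (rw q) (m - 2)) by (apply rw_pos, Hq).
    rewrite <- Q_proj. rewrite rw_Q. rewrite sqrt_sqrt by (left; apply Q_pos, Hq).
    field. apply Rgt_not_eq, Q_pos, Hq. }
  unfold lapX. cbn [dv ev ceq].
  rewrite HR.
  replace (m * (2 * IZR d + m + 1) * ev P q * (Rpower (rw q) (m - 2 - 2) *
     (proj CA q * proj CA q + proj CB q * proj CB q + proj CW q * proj CW q)))
   with (m * (2 * (IZR d * ev P q) + (m + 1) * ev P q) * (Rpower (rw q) (m - 2 - 2) *
     (proj CA q * proj CA q + proj CB q * proj CB q + proj CW q * proj CW q))) by ring.
  rewrite <- HE. ring.
Qed.

Lemma lap_ln P q : homog P 1 -> q <> origin ->
  ev (lapX (EMul P EL)) q = 3 * ev P q * Rpower (rw q) (-2).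
Proof.
  intros HP Hq. pose proof (euler P 1 HP q) as HE.
  assert (H0 : forall i, ev (dv i (dv i P)) q = 0).
  { intros i. apply (homog_neg _ (1 - 1 - 1)). repeat apply homog_dv; auto. lia. }
  assert (HR : Rpower (rw q) (-2) = Rpower (rw q) (-2 - 2) *
     (proj CA q * proj CA q + proj CB q * proj CB q + proj CW q * proj CW q)).
  { rewrite (Rpower_m2 (rw q) (-2)) by (apply rw_pos, Hq).
    rewrite <- Q_proj. rewrite rw_Q. rewrite sqrt_sqrt by (left; apply Q_pos, Hq).
    field. apply Rgt_not_eq, Q_pos, Hq. }
  unfold lapX. cbn [dv ev ceq]. rewrite !H0.
  rewrite HR. simpl (IZR 1) in HE.
  replace (3 * ev P q * (Rpower (rw q) (-2 - 2) *
     (proj CA q * proj CA q + proj CB q * proj CB q + proj CW q * proj CW q)))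
   with ((2 * (1 * ev P q) + ev P q) * (Rpower (rw q) (-2 - 2) *
     (proj CA q * proj CA q + proj CB q * proj CB q + proj CW q * proj CW q))) by ring.
  rewrite <- HE. ring.
Qed.

Lemma solve_k : forall n k P, (k <= n)%nat -> homog P (Z.of_nat k) -> INR k <= sdeg P -> slog P = 0%nat ->
  exists E, 1 <= sdeg E /\ (slog E <= 1)%nat /\
    forall q, q <> origin -> ev (lapX E) q = ev P q * Rpower (rw q) (- (INR k + 1)).
Proof.
  induction n as [n IH] using (well_founded_induction Wf_nat.lt_wf). intros k P Hkn HP Hs Hl.
  destruct (Nat.eq_dec k 1) as [->|Hk1].
  - exists (EMul (EC (/ 3)) (EMul P EL)). cbn [sdeg slog]. simpl INR in *.
    split. lra. split. lia.
    intros q Hq.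
    assert (E : ev (lapX (EMul (EC (/ 3)) (EMul P EL))) q = / 3 * ev (lapX (EMul P EL)) q).
    { unfold lapX. cbn [dv ev]. ring. }
    rewrite E, lap_ln by auto. replace (- (1 + 1)) with (-2) by ring. field.
  - set (c := (1 - INR k) * (INR k + 2)).
    assert (Hc : c <> 0).
    { unfold c. apply Rmult_integral_contrapositive. split.
      - intros H. apply Hk1. apply INR_eq. simpl. lra.
      - pose proof (pos_INR k). lra. }
    set (E0 := EMul (EC (/ c)) (EMul P (ER (1 - INR k)))).
    assert (HE0 : forall q, q <> origin -> ev (lapX E0) q =
       / c * ev (lapX P) q * Rpower (rw q) (1 - INR k) + ev P q * Rpower (rw q) (- (INR k + 1))).
    { intros q Hq.
      assert (E : ev (lapX E0) q = / c * ev (lapX (EMul P (ER (1 - INR k)))) q).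
      { unfold lapX, E0. cbn [dv ev]. ring. }
      rewrite E, (lap_prod P (Z.of_nat k)) by auto.
      rewrite <- INR_IZR_INZ.
      replace (1 - INR k - 2) with (- (INR k + 1)) by ring.
      replace ((1 - INR k) * (2 * INR k + (1 - INR k) + 1)) with c by (unfold c; ring).
      field. exact Hc. }
    assert (Hs0 : 1 <= sdeg E0) by (unfold E0; cbn [sdeg]; lra).
    assert (Hl0 : (slog E0 <= 1)%nat) by (unfold E0; cbn [slog]; lia).
    destruct k as [|[|k']].
    + exists E0. split; auto. split; auto. intros q Hq. rewrite HE0 by auto.
      assert (Z : ev (lapX P) q = 0).
      { apply (homog_neg _ (Z.of_nat 0 - 2)). apply homog_lapX; auto. lia. }
      rewrite Z. ring.
    + exfalso; apply Hk1; reflexivity.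
    + destruct (sdeg_lapX P) as [Hs1 Hl1].
      destruct (IH k' ltac:(lia) k' (lapX P) (le_n _)) as [E1 [HE1s [HE1l HE1]]].
      * replace (Z.of_nat k') with (Z.of_nat (S (S k')) - 2)%Z by lia. apply homog_lapX, HP.
      * rewrite !S_INR in Hs. lra.
      * lia.
      * exists (EAdd E0 (EMul (EC (- / c)) E1)). cbn [sdeg slog].
        split. apply Rmin_glb; lra. split. lia.
        intros q Hq.
        assert (E : ev (lapX (EAdd E0 (EMul (EC (- / c)) E1))) q =
                    ev (lapX E0) q + (- / c) * ev (lapX E1) q).
        { unfold lapX. cbn [dv ev]. ring. }
        rewrite E, HE0, HE1 by auto.
        replace (- (INR k' + 1)) with (1 - INR (S (S k'))) by (rewrite !S_INR; ring).
        field. exact Hc.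
Qed.

Fixpoint powE (e : expr) (n : nat) : expr :=
  match n with O => EC 1 | S n => EMul e (powE e n) end.

Fixpoint sumE (g : nat -> expr) (n : nat) : expr :=
  match n with O => g O | S n => EAdd (sumE g n) (g (S n)) end.

Lemma ev_powE e n q : ev (powE e n) q = ev e q ^ n.
Proof. induction n; simpl; [reflexivity | rewrite IHn; reflexivity]. Qed.

Lemma ev_sumE g n q : ev (sumE g n) q = sum_f_R0 (fun i => ev (g i) q) n.
Proof. induction n; simpl; [reflexivity | rewrite IHn; reflexivity]. Qed.

Lemma powX_props i n : homog (powE (EX i) n) (Z.of_nat n) /\ sdeg (powE (EX i) n) = INR n
  /\ slog (powE (EX i) n) = 0%nat.
Proof.
  induction n as [|n [H1 [H2 H3]]].
  - simpl. split. apply HC. split; reflexivity.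
  - cbn [powE sdeg slog]. split. apply (HM _ _ 1 (Z.of_nat n)). apply HX. exact H1. lia.
    split. rewrite H2, S_INR. ring. rewrite H3. reflexivity.
Qed.

Lemma sumE_props g n d dr : (forall i, (i <= n)%nat -> homog (g i) d /\ dr <= sdeg (g i) /\ slog (g i) = 0%nat) ->
  homog (sumE g n) d /\ dr <= sdeg (sumE g n) /\ slog (sumE g n) = 0%nat.
Proof.
  induction n; intros H; cbn [sumE].
  - apply H; lia.
  - destruct IHn as [A [B C]]. intros; apply H; lia.
    destruct (H (S n) (le_n _)) as [A' [B' C']].
    split. apply HA; auto. split. cbn [sdeg]. apply Rmin_glb; auto. cbn [slog]. lia.
Qed.

Definition mono (c : nat -> nat -> R) (k i j : nat) : expr :=
  EMul (EMul (EMul (EC (c i j)) (powE (EX CA) i)) (powE (EX CB) j)) (powE (EX CW) (k - i - j)).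

Definition polyE (c : nat -> nat -> R) (k : nat) : expr :=
  sumE (fun i => sumE (fun j => mono c k i j) (k - i)) k.

Lemma polyE_props c k : homog (polyE c k) (Z.of_nat k) /\ INR k <= sdeg (polyE c k)
  /\ slog (polyE c k) = 0%nat.
Proof.
  apply sumE_props. intros i Hi. apply sumE_props. intros j Hj.
  destruct (powX_props CA i) as [A1 [B1 C1]].
  destruct (powX_props CB j) as [A2 [B2 C2]].
  destruct (powX_props CW (k - i - j)) as [A3 [B3 C3]].
  unfold mono. cbn [sdeg slog]. rewrite B1, B2, B3, C1, C2, C3.
  split. apply (HM _ _ (Z.of_nat i + Z.of_nat j) (Z.of_nat (k - i - j))); [|exact A3|lia].
  apply (HM _ _ (Z.of_nat i) (Z.of_nat j)); [|exact A2|lia].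
  apply (HM _ _ 0 (Z.of_nat i)); [apply HC|exact A1|lia].
  split; [|reflexivity].
  rewrite Rplus_0_l, <- !plus_INR. replace (i + j + (k - i - j))%nat with k by lia. lra.
Qed.

Lemma ev_polyE c k a b w :
  ev (polyE c k) (a, b, w) =
  sum_f_R0 (fun i => sum_f_R0 (fun j => c i j * a ^ i * b ^ j * w ^ (k - i - j)) (k - i)) k.
Proof.
  unfold polyE. rewrite ev_sumE. apply sum_eq. intros i _.
  rewrite ev_sumE. apply sum_eq. intros j _.
  unfold mono. cbn [ev]. rewrite !ev_powE. reflexivity.
Qed.

Theorem lemma3p7 (U : pt -> Prop) (k : nat) (f : pt -> R) (L : diff_op) :
  open U -> U origin ->
  hom_poly k f ->
  (forall u, W 1 U u -> W 1 U (apply_op L u)) ->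
  exists u v' : pt -> R,
    W 1 U u /\ W 1 U v' /\
    forall p : pt, punct U p ->
      lap u p + apply_op L u p = f p / rw p ^ (k + 1) + v' p.
Proof.
  intros _ _ [c Hc] HL.
  destruct (polyE_props c k) as [H1 [H2 H3]].
  destruct (solve_k k k (polyE c k) (le_n _) H1 H2 H3) as [E [Hs [Hl HE]]].
  exists (ev E), (apply_op L (ev E)).
  assert (HW : W 1 U (ev E)) by (apply W_ev; auto).
  split; [exact HW|]. split; [apply HL, HW|].
  intros p [Up Hp]. f_equal.
  unfold lap. rewrite !pds_ev by auto. cbn [dvs].
  pose proof (HE p Hp) as HEp. unfold lapX in HEp. cbn [ev] in HEp. rewrite HEp.
  destruct p as [[a b] w].
  rewrite ev_polyE, Hc.
  pose proof (rw_pos _ Hp) as Hr.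
  rewrite Rpower_Ropp.
  replace (INR k + 1) with (INR (k + 1)) by (rewrite plus_INR; simpl; ring).
  rewrite Rpower_pow by auto. reflexivity.
Qed.
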